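(* Let $n,m$ be integers with $0<m<n$. Then $\mathcal{V}_n^m=\mathrm{span}\{\tilde\varphi_{n,k}^m:\ k=1,\ldots,n\}$ and $$\langle\tilde\varphi_{n,k}^m,\tilde\varphi_{n,h}^m\rangle_{L^2_w}=\delta_{k,h},\qquad k,h=1,\ldots,n.$$
   Context: Let $w(x)=(1-x^2)^{-1/2}$ on $[-1,1]$ and $\langle f,g\rangle_{L^2_w}=\int_{-1}^1 f(x)g(x)w(x)\,dx$. The orthonormal Chebyshev polynomials are $p_0(x)=\sqrt{1/\pi}$ and $p_r(x)=\sqrt{2/\pi}\cos(r\arccos x)$ for $r\ge1$. The Chebyshev nodes are $x_k^n=\cos\frac{(2k-1)\pi}{2n}$, $k=1,\ldots,n$. For $0<m<n$ set $\mu_{n,r}^m=1$ if $0\le r\le n-m$, $\mu_{n,r}^m=\frac{m+n-r}{2m}$ if $n-m<r<n+m$, and $\mu_{n,r}^m=0$ otherwise. For $r=0,\ldots,n-1$ define $q_{n,r}^m=p_r$ if $0\le r\le n-m$, and $q_{n,r}^m=\mu_{n,r}^m p_r-\mu_{n,2n-r}^m p_{2n-r}$ if $n-m<r<n$; set $\nu_{n,r}^m=1$ if $0\le r\le n-m$ and $\nu_{n,r}^m=\frac{m^2+(n-r)^2}{2m^2}$ if $n-m<r<n$. The space $\mathcal{V}_n^m$ is $\mathrm{span}\{q_{n,r}^m: r=0,\ldots,n-1\}$ (equivalently, the span of the VP polynomials $\Phi_{n,k}^m(x)=\frac{\pi}{n}\sum_{r=0}^{n+m-1}\mu_{n,r}^m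 p_r(x_k^n)p_r(x)$, $k=1,\ldots,n$). Define $\tau_{r,k}^n=\sqrt{\frac{\pi}{n\,\nu_{n,r}^m}}\,p_r(x_k^n)$ and the orthonormal VP scaling functions $\tilde\varphi_{n,k}^m(x)=\sum_{r=0}^{n-1}\tau_{r,k}^n q_{n,r}^m(x)$, $k=1,\ldots,n$. *)

(* Defs.v *)
From Stdlib Require Import Reals Lra Lia.
From Coquelicot Require Import Coquelicot.
Open Scope R_scope.

Fixpoint sumR (n : nat) (f : nat -> R) : R :=
  match n with
  | O => 0
  | S k => sumR k f + f k
  end.

Definition cheb_w (x : R) : R := / sqrt (1 - x ^ 2).

Definition cheb_p (r : nat) (x : R) : R :=
  match r with
  | O => sqrt (1 / PI)
  | _ => sqrt (2 / PI) * cos (INR r * acos x)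
  end.

Definition cheb_node (n k : nat) : R :=
  cos ((2 * INR k - 1) * PI / (2 * INR n)).

Definition vp_mu (n m r : nat) : R :=
  if (r <=? n - m)%nat then 1
  else if (r <? n + m)%nat then (INR m + INR n - INR r) / (2 * INR m)
  else 0.

Definition vp_q (n m r : nat) (x : R) : R :=
  if (r <=? n - m)%nat then cheb_p r x
  else vp_mu n m r * cheb_p r x
       - vp_mu n m (2 * n - r) * cheb_p (2 * n - r) x.

Definition vp_nu (n m r : nat) : R :=
  if (r <=? n - m)%nat then 1
  else (INR m ^ 2 + (INR n - INR r) ^ 2) / (2 * INR m ^ 2).

Definition vp_tau (n m r k : nat) : R :=
  sqrt (PI / (INR n * vp_nu n m r)) * cheb_p r (cheb_node n k).

Definition vp_phi (n m k : nat) (x : R) : R :=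
  sumR n (fun r => vp_tau n m r k * vp_q n m r x).

Definition in_Vnm (n m : nat) (f : R -> R) : Prop :=
  exists c : nat -> R, forall x, -1 <= x <= 1 ->
    f x = sumR n (fun r => c r * vp_q n m r x).

Definition in_span_phi (n m : nat) (f : R -> R) : Prop :=
  exists c : nat -> R, forall x, -1 <= x <= 1 ->
    f x = sumR n (fun i => c i * vp_phi n m (S i) x).

(* Main.v *)
Require Import Defs.
From Stdlib Require Import Reals Lra Lia.
From Coquelicot Require Import Coquelicot.
Open Scope R_scope.

Lemma acos_lt_of (y t : R) : -1 <= y <= 1 -> 0 <= t <= PI -> cos t < y -> acos y < t.
Proof.
  intros Hy Ht H. destruct (Rlt_or_le (acos y) t) as [h|h]; auto.
  exfalso. pose proof (acos_bound y).
  pose proof (cos_decr_1 t (acos y) ltac:(lra) ltac:(lra) ltac:(lra) ltac:(lra) h).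
  rewrite cos_acos in H1 by lra. lra.
Qed.

Lemma acos_gt_of (y t : R) : -1 <= y <= 1 -> 0 <= t <= PI -> y < cos t -> t < acos y.
Proof.
  intros Hy Ht H. destruct (Rlt_or_le t (acos y)) as [h|h]; auto.
  exfalso. pose proof (acos_bound y).
  pose proof (cos_decr_1 (acos y) t ltac:(lra) ltac:(lra) ltac:(lra) ltac:(lra) h).
  rewrite cos_acos in H1 by lra. lra.
Qed.

Lemma ball_R (x e y : R) : Rabs (y - x) < e -> ball x e y.
Proof. intros H. exact H. Qed.

Lemma acos_lim_m1 : filterlim acos (at_right (-1)) (locally PI).
Proof.
  apply filterlim_locally. intros eps.
  pose proof PI_RGT_0 as HPI.
  set (e := Rmin eps (PI/2)).
  assert (He : 0 < e /\ e <= eps /\ e <= PI/2).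
  { unfold e; split; [apply Rmin_pos; [apply cond_pos|lra]|split; [apply Rmin_l|apply Rmin_r]]. }
  assert (Hc : -1 < cos (PI - e)).
  { rewrite <- cos_PI. apply cos_decreasing_1; lra. }
  assert (Hd : 0 < 1 + cos (PI - e)) by lra.
  exists (mkposreal _ Hd). intros y Hy Hy1. apply ball_R.
  change (Rabs (y - -1) < 1 + cos (PI - e)) in Hy.
  apply Rabs_def2 in Hy. destruct Hy as [Hy _].
  pose proof (COS_bound (PI - e)).
  pose proof (acos_gt_of y (PI - e) ltac:(lra) ltac:(lra) ltac:(lra)).
  pose proof (acos_bound y).
  apply Rabs_def1; lra.
Qed.

Lemma acos_lim_1 : filterlim acos (at_left 1) (locally 0).
Proof.
  apply filterlim_locally. intros eps.
  pose proof PI_RGT_0 as HPI.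
  set (e := Rmin eps (PI/2)).
  assert (He : 0 < e /\ e <= eps /\ e <= PI/2).
  { unfold e; split; [apply Rmin_pos; [apply cond_pos|lra]|split; [apply Rmin_l|apply Rmin_r]]. }
  assert (Hc : cos e < 1).
  { rewrite <- cos_0. apply cos_decreasing_1; lra. }
  assert (Hd : 0 < 1 - cos e) by lra.
  exists (mkposreal _ Hd). intros y Hy Hy1. apply ball_R.
  change (Rabs (y - 1) < 1 - cos e) in Hy.
  apply Rabs_def2 in Hy. destruct Hy as [_ Hy].
  pose proof (COS_bound e).
  pose proof (acos_lt_of y e ltac:(lra) ltac:(lra) ltac:(lra)).
  pose proof (acos_bound y).
  apply Rabs_def1; lra.
Qed.

Lemma acos_is_derive (x : R) : -1 < x < 1 -> is_derive acos x (-1 / sqrt (1 - x^2)).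
Proof.
  intros Hx. apply is_derive_Reals.
  apply (derive_pt_eq_1 _ _ _ (derivable_pt_acos x Hx)).
  rewrite derive_pt_acos. unfold Rsqr. f_equal. f_equal. ring.
Qed.

Lemma gen_int (P G f : R -> R) :
  (forall t, is_derive G t (P t)) -> (forall t, continuous P t) ->
  (forall x, -1 < x < 1 -> f x = P (acos x) * cheb_w x) ->
  is_RInt_gen f (at_right (-1)) (at_left 1) (G PI - G 0).
Proof.
  intros HG HP Hf.
  set (F := fun x => - G (acos x)).
  assert (HF : forall x, -1 < x < 1 -> is_derive F x (f x)).
  { intros x Hx. unfold F. rewrite Hf by exact Hx.
    assert (Hs : 0 < sqrt (1 - x^2)) by (apply sqrt_lt_R0; nra).
    assert (H1 : is_derive (fun y => G (acos y)) x (scal (-1 / sqrt (1 - x^2)) (P (acos x))))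
      by exact (is_derive_comp G acos x _ _ (HG _) (acos_is_derive x Hx)).
    pose proof (is_derive_opp _ _ _ H1) as H2.
    replace (P (acos x) * cheb_w x) with (opp (scal (-1 / sqrt (1 - x^2)) (P (acos x)))).
    exact H2.
    unfold cheb_w, opp, scal; simpl. unfold mult; simpl. field. simpl in Hs; lra. }
  assert (Hcont : forall x, -1 < x < 1 -> continuous f x).
  { intros x Hx.
    assert (Hloc : locally x (fun y => -1 < y < 1)).
    { assert (Hd : 0 < Rmin (x + 1) (1 - x)) by (apply Rmin_pos; lra).
      exists (mkposreal _ Hd). intros y Hy. change (Rabs (y - x) < Rmin (x+1) (1-x)) in Hy.
      pose proof (Rmin_l (x+1) (1-x)). pose proof (Rmin_r (x+1) (1-x)).
      apply Rabs_def2 in Hy. lra. }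
    apply continuous_ext_loc with (fun y => P (acos y) * cheb_w y).
    { generalize Hloc. apply filter_imp. intros y Hy. symmetry; apply Hf; exact Hy. }
    apply (continuous_mult (fun y => P (acos y)) cheb_w).
    - apply (continuous_comp acos P). apply (ex_derive_continuous (K:=R_AbsRing) (V:=R_NormedModule)). eexists. apply acos_is_derive; exact Hx.
      apply HP.
    - apply (ex_derive_continuous (K:=R_AbsRing) (V:=R_NormedModule)). unfold cheb_w. auto_derive.
      assert (0 < 1 - x^2) by nra. split; [lra|]. split; [|auto].
      apply Rgt_not_eq. apply sqrt_lt_R0. lra. }
  assert (Hin : filter_prod (at_right (-1)) (at_left 1) (fun ab => -1 < fst ab < 1 /\ -1 < snd ab < 1)).
  { apply Filter_prod with (fun a => -1 < a < 1) (fun b => -1 < b < 1).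
    - exists (mkposreal 1 Rlt_0_1). intros y Hy Hy1. change (Rabs (y - -1) < 1) in Hy.
      apply Rabs_def2 in Hy. lra.
    - exists (mkposreal 1 Rlt_0_1). intros y Hy Hy1. change (Rabs (y - 1) < 1) in Hy.
      apply Rabs_def2 in Hy. lra.
    - intros a b Ha Hb; simpl; auto. }
  apply is_RInt_gen_ext with (Derive F).
  { generalize Hin. apply filter_imp. intros [a b] [Ha Hb] x Hx; simpl in *.
    apply is_derive_unique. apply HF.
    pose proof (Rmin_l a b). pose proof (Rmin_r a b). pose proof (Rmax_l a b). pose proof (Rmax_r a b).
    destruct (Rle_or_lt a b); [rewrite Rmin_left, Rmax_right in Hx by lra|rewrite Rmin_right, Rmax_left in Hx by lra]; lra. }
  replace (G PI - G 0) with ((- G 0) - (- G PI)) by ring.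
  assert (Hint : forall a b x, -1 < a < 1 -> -1 < b < 1 -> Rmin a b <= x <= Rmax a b -> -1 < x < 1).
  { intros a b x Ha Hb Hx.
    destruct (Rle_or_lt a b); [rewrite Rmin_left, Rmax_right in Hx by lra|rewrite Rmin_right, Rmax_left in Hx by lra]; lra. }
  apply is_RInt_gen_Derive.
  - generalize Hin. apply filter_imp. intros [a b] [Ha Hb] x Hx; simpl in *.
    eexists. apply HF. exact (Hint _ _ _ Ha Hb Hx).
  - generalize Hin. apply filter_imp. intros [a b] [Ha Hb] x Hx; simpl in *.
    pose proof (Hint _ _ _ Ha Hb Hx) as Hx1.
    apply continuous_ext_loc with f.
    + assert (Hd : 0 < Rmin (x + 1) (1 - x)) by (apply Rmin_pos; lra).
      exists (mkposreal _ Hd). intros y Hy. change (Rabs (y - x) < Rmin (x+1) (1-x)) in Hy.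
      pose proof (Rmin_l (x+1) (1-x)). pose proof (Rmin_r (x+1) (1-x)).
      apply Rabs_def2 in Hy. symmetry. apply is_derive_unique. apply HF. lra.
    + apply Hcont; exact Hx1.
  - unfold F. apply (filterlim_comp _ _ _ acos (fun t => - G t) _ (locally PI)).
    apply acos_lim_m1.
    apply (continuous_opp (K:=R_AbsRing) (V:=R_NormedModule) G).
    apply (ex_derive_continuous (K:=R_AbsRing) (V:=R_NormedModule)). eexists. apply HG.
  - unfold F. apply (filterlim_comp _ _ _ acos (fun t => - G t) _ (locally 0)).
    apply acos_lim_1.
    apply (continuous_opp (K:=R_AbsRing) (V:=R_NormedModule) G).
    apply (ex_derive_continuous (K:=R_AbsRing) (V:=R_NormedModule)). eexists. apply HG.
Qed.

Definition coef (r : nat) : R := match r with O => sqrt (1/PI) | S _ => sqrt (2/PI) end.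

Lemma cheb_p_eq r x : cheb_p r x = coef r * cos (INR r * acos x).
Proof. destruct r; simpl; [rewrite Rmult_0_l, cos_0; ring | reflexivity]. Qed.

Lemma sinZ (z : Z) : sin (IZR z * PI) = 0.
Proof. apply sin_eq_0_1. exists z. reflexivity. Qed.

Lemma sin_nat_PI (a : nat) : sin (INR a * PI) = 0.
Proof. rewrite INR_IZR_INZ. apply sinZ. Qed.

Lemma sin_natdiff_PI (a b : nat) : sin ((INR a - INR b) * PI) = 0.
Proof. rewrite !INR_IZR_INZ, <- minus_IZR. apply sinZ. Qed.

Lemma sin_natsum_PI (a b : nat) : sin ((INR a + INR b) * PI) = 0.
Proof. rewrite <- plus_INR. apply sin_nat_PI. Qed.

Lemma coef_sq r : coef r * coef r = if (r =? 0)%nat then 1/PI else 2/PI.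
Proof.
  pose proof PI_RGT_0. destruct r; simpl; apply sqrt_sqrt; unfold Rdiv; 
  apply Rmult_le_pos; try lra; left; apply Rinv_0_lt_compat; lra.
Qed.

Lemma gen_int' (P G f : R -> R) (l : R) :
  (forall t, is_derive G t (P t)) -> (forall t, continuous P t) ->
  (forall x, -1 < x < 1 -> f x = P (acos x) * cheb_w x) -> G PI - G 0 = l ->
  is_RInt_gen f (at_right (-1)) (at_left 1) l.
Proof. intros H1 H2 H3 <-. apply gen_int with P; auto. Qed.

Lemma pair_int a b :
  is_RInt_gen (fun x => cheb_p a x * cheb_p b x * cheb_w x) (at_right (-1)) (at_left 1)
    (if (a =? b)%nat then 1 else 0).
Proof.
  pose proof PI_RGT_0 as HPI.
  set (A := INR a). set (B := INR b).
  set (P := fun t => coef a * cos (A * t) * (coef b * cos (B * t))).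
  assert (HP : forall t, continuous P t).
  { intros t. apply (ex_derive_continuous (K:=R_AbsRing) (V:=R_NormedModule)). unfold P. auto_derive. auto. }
  assert (Hf : forall x, -1 < x < 1 -> cheb_p a x * cheb_p b x * cheb_w x = P (acos x) * cheb_w x).
  { intros x _. unfold P. rewrite !cheb_p_eq. reflexivity. }
  destruct (Nat.eqb_spec a b) as [<-|Hab].
  - destruct a as [|a'].
    + set (c := coef 0 * coef 0).
      apply (gen_int' P (fun t => c * t)); auto.
      2:{ unfold c. rewrite coef_sq. simpl. field. lra. }
      intros t. unfold P, A, B. simpl. rewrite Rmult_0_l, cos_0.
      auto_derive; auto. unfold c; simpl; ring.
    + set (c := coef (S a') * coef (S a')).
      assert (HA : 0 < A) by (unfold A; apply lt_0_INR; lia).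
      set (G := fun t => c * (t / 2 + sin (2 * A * t) / (4 * A))).
      apply (gen_int' P G); auto.
      2:{ unfold G, c. rewrite coef_sq. simpl.
          replace (2 * A * PI) with (INR (2 * S a') * PI) by (unfold A; rewrite mult_INR; simpl; ring).
          rewrite sin_nat_PI. rewrite Rmult_0_r, sin_0. field. lra. }
      intros t. unfold G, P. subst B. fold A.
      auto_derive; auto. unfold c; simpl.
      replace (2 * A * t) with (2 * (A * t)) by ring. rewrite cos_2a_cos. field. lra.
  - assert (HAB : A - B <> 0).
    { unfold A, B. intros Hz. apply Hab. apply INR_eq. lra. }
    assert (HAB2 : A + B <> 0).
    { unfold A, B. pose proof (pos_INR a). pose proof (pos_INR b). intros Hz.
      apply Hab. assert (INR a = 0) by lra. assert (INR b = 0) by lra.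
      apply INR_eq. lra. }
    set (c := coef a * coef b).
    set (G := fun t => c * (sin ((A - B) * t) / (2 * (A - B)) + sin ((A + B) * t) / (2 * (A + B)))).
    apply (gen_int' P G); auto.
    2:{ unfold G, A, B. rewrite sin_natdiff_PI, sin_natsum_PI, !Rmult_0_r, sin_0. field. split; auto. }
    intros t. unfold G, P.
    auto_derive; auto. unfold c; simpl.
    replace ((A - B) * t) with (A * t - B * t) by ring.
    replace ((A + B) * t) with (A * t + B * t) by ring.
    rewrite cos_minus, cos_plus. field. split; auto.
Qed.

Lemma sumR_ext N f g : (forall i, (i < N)%nat -> f i = g i) -> sumR N f = sumR N g.
Proof. induction N; intros H; simpl; auto. rewrite IHN by (intros; apply H; lia). rewrite H by lia. auto. Qed.

Lemma sumR_plus N f g : sumR N (fun i => f i + g i) = sumR N f + sumR N g.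
Proof. induction N; simpl; [ring|rewrite IHN; ring]. Qed.

Lemma sumR_scal N c f : c * sumR N f = sumR N (fun i => c * f i).
Proof. induction N; simpl; [ring|rewrite <- IHN; ring]. Qed.

Lemma sumR_scal_r N c f : sumR N f * c = sumR N (fun i => f i * c).
Proof. induction N; simpl; [ring|rewrite <- IHN; ring]. Qed.

Lemma sumR_mul N M f g : sumR N f * sumR M g = sumR N (fun i => sumR M (fun j => f i * g j)).
Proof. rewrite sumR_scal_r. apply sumR_ext. intros i _. apply sumR_scal. Qed.

Lemma sumR_swap N M F : sumR N (fun i => sumR M (fun j => F i j)) = sumR M (fun j => sumR N (fun i => F i j)).
Proof. induction N; simpl. induction M; simpl; [auto|rewrite <- IHM; ring].
  rewrite IHN, <- sumR_plus. auto. Qed.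

Lemma sumR_const N c : sumR N (fun _ => c) = INR N * c.
Proof. induction N; simpl sumR; [simpl; ring| rewrite IHN, S_INR; ring]. Qed.

Lemma sumR_delta N i (v : nat -> R) : (i < N)%nat -> sumR N (fun j => if (i =? j)%nat then v j else 0) = v i.
Proof.
  induction N; intros H; [lia|]. simpl.
  destruct (Nat.eqb_spec i N).
  - subst. rewrite (sumR_ext _ _ (fun _ => 0)). rewrite sumR_const. ring.
    intros j Hj. destruct (Nat.eqb_spec N j); [lia|auto].
  - rewrite IHN by lia. ring.
Qed.

Lemma sumR_S N f : sumR (S N) f = sumR N f + f N.
Proof. reflexivity. Qed.
Lemma sumR_0 f : sumR 0 f = 0.
Proof. reflexivity. Qed.

Lemma tele_k (b : R) N : 2 * sin b * sumR N (fun i => cos ((2 * INR (S i) - 1) * b)) = sin (2 * INR N * b).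
Proof.
  induction N. rewrite sumR_0. simpl INR. replace (2 * 0 * b) with 0 by ring. rewrite sin_0; ring.
  rewrite sumR_S, Rmult_plus_distr_l, IHN.
  replace (2 * INR (S N) * b) with ((2 * INR (S N) - 1) * b + b) by ring.
  replace (2 * INR N * b) with ((2 * INR (S N) - 1) * b - b) by (rewrite S_INR; ring).
  rewrite sin_plus, sin_minus. ring.
Qed.

Lemma tele_r (a : R) N : 2 * sin a * sumR N (fun r => cos (2 * INR r * a)) = sin ((2 * INR N - 1) * a) + sin a.
Proof.
  induction N. rewrite sumR_0. simpl INR. replace ((2*0-1)*a) with (-a) by ring. rewrite sin_neg; ring.
  rewrite sumR_S, Rmult_plus_distr_l, IHN.
  replace ((2 * INR (S N) - 1) * a) with (2 * INR N * a + a) by (rewrite S_INR; ring).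
  replace ((2 * INR N - 1) * a) with (2 * INR N * a - a) by ring.
  rewrite sin_plus, sin_minus. ring.
Qed.

Lemma sin_ne0 (n : nat) (j : R) : (0 < n)%nat -> 0 < Rabs j < 2 * INR n -> sin (j * PI / (2 * INR n)) <> 0.
Proof.
  intros Hn Hj. pose proof PI_RGT_0. assert (0 < INR n) by (apply lt_0_INR; lia).
  destruct (Rle_or_lt 0 j).
  - rewrite Rabs_pos_eq in Hj by lra. apply Rgt_not_eq. apply sin_gt_0.
    + apply Rdiv_lt_0_compat; nra.
    + apply Rmult_lt_reg_r with (2 * INR n); [lra|]. unfold Rdiv. rewrite Rmult_assoc, Rinv_l by lra. nra.
  - rewrite Rabs_left in Hj by lra.
    replace (j * PI / (2 * INR n)) with (- ((-j) * PI / (2 * INR n))) by (field; lra).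
    rewrite sin_neg. apply Ropp_neq_0_compat. apply Rgt_not_eq. apply sin_gt_0.
    + apply Rdiv_lt_0_compat; nra.
    + apply Rmult_lt_reg_r with (2 * INR n); [lra|]. unfold Rdiv. rewrite Rmult_assoc, Rinv_l by lra. nra.
Qed.

Definition theta (n k : nat) : R := (2 * INR k - 1) * PI / (2 * INR n).

Lemma sum_k_zero (n : nat) (j : R) : (0 < n)%nat -> sin (j * PI) = 0 -> 0 < Rabs j < 2 * INR n ->
  sumR n (fun i => cos (j * theta n (S i))) = 0.
Proof.
  intros Hn Hs Hj. pose proof (sin_ne0 n j Hn Hj) as Hb.
  assert (0 < INR n) by (apply lt_0_INR; lia).
  pose proof (tele_k (j * PI / (2 * INR n)) n) as T.
  replace (2 * INR n * (j * PI / (2 * INR n))) with (j * PI) in T by (field; lra).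
  rewrite Hs in T.
  rewrite (sumR_ext _ _ (fun i => cos ((2 * INR (S i) - 1) * (j * PI / (2 * INR n))))).
  - apply Rmult_eq_reg_l with (2 * sin (j * PI / (2 * INR n))). rewrite T. ring.
    intros H0. apply Hb. lra.
  - intros i _. unfold theta. f_equal. field. lra.
Qed.

Lemma sum_r_formula (n : nat) (j : R) : (0 < n)%nat -> sin (j * PI) = 0 -> 0 < Rabs j < 2 * INR n ->
  sumR n (fun r => cos (2 * INR r * (j * PI / (2 * INR n)))) = (1 - cos (j * PI)) / 2.
Proof.
  intros Hn Hs Hj. pose proof (sin_ne0 n j Hn Hj) as Hb.
  assert (0 < INR n) by (apply lt_0_INR; lia).
  set (a := j * PI / (2 * INR n)) in *.
  pose proof (tele_r a n) as T.
  replace ((2 * INR n - 1) * a) with (j * PI - a) in T by (unfold a; field; lra).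
  rewrite sin_minus, Hs in T.
  apply Rmult_eq_reg_l with (2 * sin a). rewrite T. field.
  intros H0. apply Hb. lra.
Qed.

Lemma acos_node n k : (1 <= k <= n)%nat -> acos (cheb_node n k) = theta n k.
Proof.
  intros Hk. unfold cheb_node. fold (theta n k). apply acos_cos.
  pose proof PI_RGT_0. assert (1 <= INR k) by (apply (le_INR 1); lia).
  assert (INR k <= INR n) by (apply le_INR; lia).
  unfold theta. split.
  - apply Rmult_le_pos; [nra|]. left; apply Rinv_0_lt_compat; lra.
  - apply Rmult_le_reg_r with (2 * INR n); [lra|]. unfold Rdiv. rewrite Rmult_assoc, Rinv_l by lra. nra.
Qed.

Lemma p_node r n k : (1 <= k <= n)%nat -> cheb_p r (cheb_node n k) = coef r * cos (INR r * theta n k).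
Proof. intros Hk. rewrite cheb_p_eq, acos_node by auto. reflexivity. Qed.

Lemma cos_prod (a b t : R) : cos (a * t) * cos (b * t) = (cos ((a - b) * t) + cos ((a + b) * t)) / 2.
Proof.
  replace ((a - b) * t) with (a * t - b * t) by ring.
  replace ((a + b) * t) with (a * t + b * t) by ring.
  rewrite cos_minus, cos_plus. field.
Qed.

Lemma Rabs_between (j c : R) : j <> 0 -> -c < j < c -> 0 < Rabs j < c.
Proof. intros H1 H2. split; [apply Rabs_pos_lt; auto| apply Rabs_def1; lra]. Qed.

Lemma D2 n r s : (0 < n)%nat -> (r < n)%nat -> (s < n)%nat ->
  sumR n (fun i => cheb_p r (cheb_node n (S i)) * cheb_p s (cheb_node n (S i))) =
  if (r =? s)%nat then INR n / PI else 0.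
Proof.
  intros Hn Hr Hs. pose proof PI_RGT_0.
  assert (HnR : 0 < INR n) by (apply lt_0_INR; lia).
  assert (HrR : INR r < INR n) by (apply lt_INR; lia).
  assert (HsR : INR s < INR n) by (apply lt_INR; lia).
  pose proof (pos_INR r). pose proof (pos_INR s).
  rewrite (sumR_ext _ _ (fun i => coef r * coef s * ((cos ((INR r - INR s) * theta n (S i)) + cos ((INR r + INR s) * theta n (S i))) / 2))).
  2:{ intros i Hi. rewrite !p_node by lia. rewrite <- cos_prod. ring. }
  rewrite <- sumR_scal.
  rewrite (sumR_ext _ _ (fun i => (/2) * (cos ((INR r - INR s) * theta n (S i)) + cos ((INR r + INR s) * theta n (S i))))).
  2:{ intros i _. field. }
  rewrite <- sumR_scal, sumR_plus.
  destruct (Nat.eqb_spec r s) as [<-|Hrs].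
  - rewrite Rminus_diag.
    rewrite (sumR_ext _ (fun i => cos (0 * _)) (fun _ => 1)) by (intros; rewrite Rmult_0_l, cos_0; auto).
    rewrite sumR_const. rewrite coef_sq.
    destruct r as [|r'].
    + simpl. rewrite Rplus_0_l.
      rewrite (sumR_ext _ (fun i => cos (0 * _)) (fun _ => 1)) by (intros; rewrite Rmult_0_l, cos_0; auto).
      rewrite sumR_const. field. lra.
    + simpl Nat.eqb. rewrite sum_k_zero; auto.
      * field. lra.
      * rewrite <- plus_INR. apply sin_nat_PI.
      * pose proof (lt_0_INR (S r') ltac:(lia)). rewrite Rabs_pos_eq by lra. split; lra.
  - assert (HrsR : INR r <> INR s) by (intros Hz; apply Hrs; apply INR_eq; auto).
    rewrite !sum_k_zero; auto.
    + ring.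
    + rewrite <- plus_INR. apply sin_nat_PI.
    + assert (0 < INR r + INR s).
      { destruct (Rle_lt_or_eq_dec 0 (INR r) H0); [lra|].
        destruct (Rle_lt_or_eq_dec 0 (INR s) H1); [lra|]. exfalso; apply HrsR; lra. }
      rewrite Rabs_pos_eq by lra. split; lra.
    + apply sin_natdiff_PI.
    + apply Rabs_between; [intros Hz; apply HrsR; lra|lra].
Qed.

Lemma coef_sum (g : nat -> R) N : sumR (S N) (fun r => coef r * coef r * g r) = 2 / PI * sumR (S N) g - g O / PI.
Proof.
  induction N.
  - rewrite !sumR_S, !sumR_0. rewrite coef_sq. simpl. field. pose proof PI_RGT_0; lra.
  - rewrite sumR_S, IHN, (sumR_S (S N) g). rewrite coef_sq. change (if false then 1/PI else 2/PI) with (2/PI). change (if (S N =? 0)%nat then 1/PI else 2/PI) with (2/PI). ring.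
Qed.

Lemma sin_kPI_m (z : R) : sin (z * PI) = 0 -> sin ((z - 1) * PI) = 0.
Proof. intros H. replace ((z - 1) * PI) with (z * PI - PI) by ring. rewrite sin_minus, H, sin_PI. ring. Qed.

Lemma D1 n k h : (1 <= k <= n)%nat -> (1 <= h <= n)%nat ->
  sumR n (fun r => cheb_p r (cheb_node n k) * cheb_p r (cheb_node n h)) =
  if (k =? h)%nat then INR n / PI else 0.
Proof.
  intros Hk Hh. pose proof PI_RGT_0.
  assert (HnR : 0 < INR n) by (apply lt_0_INR; lia).
  assert (HkR : 1 <= INR k <= INR n) by (split; [apply (le_INR 1)|apply le_INR]; lia).
  assert (HhR : 1 <= INR h <= INR n) by (split; [apply (le_INR 1)|apply le_INR]; lia).
  set (a1 := (INR k + INR h - 1) * PI / (2 * INR n)).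
  set (a2 := (INR k - INR h) * PI / (2 * INR n)).
  assert (Hcc : forall x y, cos x * cos y = (cos (x - y) + cos (x + y)) / 2).
  { intros x y. rewrite cos_minus, cos_plus. field. }
  destruct n as [|n']; [lia|].
  rewrite (sumR_ext _ _ (fun r => coef r * coef r * ((cos (2 * INR r * a2) + cos (2 * INR r * a1)) / 2))).
  2:{ intros r _. rewrite !p_node by lia.
      replace (coef r * cos (INR r * theta (S n') k) * (coef r * cos (INR r * theta (S n') h)))
        with (coef r * coef r * (cos (INR r * theta (S n') k) * cos (INR r * theta (S n') h))) by ring.
      rewrite Hcc. f_equal. f_equal. f_equal.
      - f_equal. unfold a2, theta. field. lra.
      - f_equal. unfold a1, theta. field. lra. }
  rewrite coef_sum. simpl INR at 3. rewrite !Rmult_0_r, Rmult_0_l, cos_0.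
  rewrite (sumR_ext _ _ (fun r => /2 * (cos (2 * INR r * a2) + cos (2 * INR r * a1)))) by (intros; field).
  rewrite <- sumR_scal, sumR_plus.
  set (n := S n') in *.
  assert (Hs1 : sin ((INR k + INR h - 1) * PI) = 0).
  { apply sin_kPI_m. apply sin_natsum_PI. }
  assert (HS1 : sumR n (fun r => cos (2 * INR r * a1)) = (1 - cos ((INR k + INR h - 1) * PI)) / 2).
  { apply sum_r_formula; auto. unfold n; lia. rewrite Rabs_pos_eq by lra. split; lra. }
  rewrite HS1. rewrite Rmult_0_l, cos_0. clearbody n.
  destruct (Nat.eqb_spec k h) as [<-|Hkh].
  - unfold a2. rewrite Rminus_diag.
    rewrite (sumR_ext _ _ (fun _ => 1)).
    2:{ intros r _. replace (2 * INR r * (0 * PI / (2 * INR n))) with 0 by (field; lra). apply cos_0. }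
    rewrite sumR_const.
    replace ((INR k + INR k - 1) * PI) with (PI * -1 + 2 * INR k * PI) by ring.
    rewrite cos_period. replace (PI * -1) with (- PI) by ring. rewrite cos_neg, cos_PI.
    field. lra.
  - assert (HkhR : INR k <> INR h) by (intros Hz; apply Hkh; apply INR_eq; auto).
    assert (HS2 : sumR n (fun r => cos (2 * INR r * a2)) = (1 - cos ((INR k - INR h) * PI)) / 2).
    { apply sum_r_formula; auto. lia. apply sin_natdiff_PI.
      apply Rabs_between; [intros Hz; apply HkhR; lra|lra]. }
    rewrite HS2.
    assert (Hc : cos ((INR k + INR h - 1) * PI) + cos ((INR k - INR h) * PI) = 0).
    { rewrite form1.
      replace (((INR k + INR h - 1) * PI + (INR k - INR h) * PI) / 2) with (PI / 2 + (INR k - 1) * PI) by field.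
      rewrite cos_plus, cos_PI2, sin_PI2, sin_kPI_m by apply sin_nat_PI. ring. }
    replace (cos ((INR k - INR h) * PI)) with (- cos ((INR k + INR h - 1) * PI)) by lra.
    field. lra.
Qed.

Notation IG f l := (@is_RInt_gen R_NormedModule f (at_right (-1)) (at_left 1) l).

Lemma Hin_filter : filter_prod (at_right (-1)) (at_left 1) (fun ab => -1 < fst ab < 1 /\ -1 < snd ab < 1).
Proof.
  apply Filter_prod with (fun a => -1 < a < 1) (fun b => -1 < b < 1).
  - exists (mkposreal 1 Rlt_0_1). intros y Hy Hy1. change (Rabs (y - -1) < 1) in Hy.
    apply Rabs_def2 in Hy. lra.
  - exists (mkposreal 1 Rlt_0_1). intros y Hy Hy1. change (Rabs (y - 1) < 1) in Hy.
    apply Rabs_def2 in Hy. lra.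
  - intros a b Ha Hb; simpl; auto.
Qed.

Lemma IG_ext f g l : (forall x, -1 < x < 1 -> f x = g x) -> IG f l -> IG g l.
Proof.
  intros H. apply is_RInt_gen_ext. generalize Hin_filter. apply filter_imp.
  intros [a b] [Ha Hb] x Hx; simpl in *. apply H.
  destruct (Rle_or_lt a b); [rewrite Rmin_left, Rmax_right in Hx by lra|rewrite Rmin_right, Rmax_left in Hx by lra]; lra.
Qed.

Lemma IG_val f (l l' : R) : IG f l -> l = l' -> IG f l'.
Proof. intros H <-; auto. Qed.

Lemma IG_zero : IG (fun _ => 0) 0.
Proof.
  apply (gen_int' (fun _ => 0) (fun _ => 0)).
  - intros t. apply (is_derive_const (K:=R_AbsRing) (V:=R_NormedModule) 0).
  - intros t. apply (continuous_const (U:=R_UniformSpace) (V:=R_UniformSpace) 0).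
  - intros; ring.
  - ring.
Qed.

Lemma IG_plus f g lf lg : IG f lf -> IG g lg -> IG (fun x => f x + g x) (lf + lg).
Proof. intros H1 H2. exact (is_RInt_gen_plus f g lf lg H1 H2). Qed.

Lemma IG_scal c f l : IG f l -> IG (fun x => c * f x) (c * l).
Proof. intros H1. exact (is_RInt_gen_scal f c l H1). Qed.

Lemma IG_sum N (f : nat -> R -> R) (l : nat -> R) :
  (forall i, (i < N)%nat -> IG (f i) (l i)) -> IG (fun x => sumR N (fun i => f i x)) (sumR N l).
Proof.
  induction N; intros H.
  - exact IG_zero.
  - apply (IG_plus (fun x => sumR N (fun i => f i x)) (f N)).
    apply IHN; intros; apply H; lia. apply H; lia.
Qed.

Definition alpha n m r := if (r <=? n - m)%nat then 1 else vp_mu n m r.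
Definition beta n m r := if (r <=? n - m)%nat then 0 else - vp_mu n m (2 * n - r).

Lemma q_eq n m r x : vp_q n m r x = alpha n m r * cheb_p r x + beta n m r * cheb_p (2 * n - r) x.
Proof. unfold vp_q, alpha, beta. destruct (r <=? n - m)%nat; ring. Qed.

Lemma ab_nu n m r : (0 < m)%nat -> (m < n)%nat -> (r < n)%nat ->
  alpha n m r * alpha n m r + beta n m r * beta n m r = vp_nu n m r.
Proof.
  intros Hm Hmn Hr. unfold alpha, beta, vp_nu.
  destruct (Nat.leb_spec0 r (n - m)). ring.
  unfold vp_mu.
  destruct (Nat.leb_spec0 r (n - m)); [lia|].
  destruct (Nat.leb_spec0 (2 * n - r) (n - m)); [lia|].
  destruct (Nat.ltb_spec0 r (n + m)); [|lia].
  destruct (Nat.ltb_spec0 (2 * n - r) (n + m)); [|lia].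
  rewrite minus_INR by lia. rewrite mult_INR. simpl INR.
  assert (0 < INR m) by (apply lt_0_INR; lia). field. lra.
Qed.

Lemma nu_pos n m r : (0 < m)%nat -> 0 < vp_nu n m r.
Proof.
  intros Hm. unfold vp_nu. destruct (r <=? n - m)%nat. lra.
  assert (0 < INR m) by (apply lt_0_INR; lia).
  assert (0 < INR m ^ 2) by (apply pow_lt; lra).
  pose proof (pow2_ge_0 (INR n - INR r)).
  apply Rdiv_lt_0_compat; lra.
Qed.

Lemma int_qq n m r s : (0 < m)%nat -> (m < n)%nat -> (r < n)%nat -> (s < n)%nat ->
  IG (fun x => vp_q n m r x * vp_q n m s x * cheb_w x) (if (r =? s)%nat then vp_nu n m r else 0).
Proof.
  intros Hm Hmn Hr Hs.
  set (ar := alpha n m r). set (br := beta n m r). set (as_ := alpha n m s). set (bs := beta n m s).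
  set (r' := (2 * n - r)%nat). set (s' := (2 * n - s)%nat).
  pose proof (IG_plus _ _ _ _
    (IG_plus _ _ _ _ (IG_scal (ar * as_) _ _ (pair_int r s)) (IG_scal (ar * bs) _ _ (pair_int r s')))
    (IG_plus _ _ _ _ (IG_scal (br * as_) _ _ (pair_int r' s)) (IG_scal (br * bs) _ _ (pair_int r' s')))) as H.
  eapply IG_val. eapply IG_ext; [|exact H].
  - intros x _. simpl. rewrite !q_eq. fold ar br as_ bs r' s'. ring.
  - assert (E1 : (r =? s')%nat = false) by (apply Nat.eqb_neq; unfold s'; lia).
    assert (E2 : (r' =? s)%nat = false) by (apply Nat.eqb_neq; unfold r'; lia).
    rewrite E1, E2.
    destruct (Nat.eqb_spec r s) as [<-|Hrs].
    + unfold as_, bs, ar, br. rewrite <- (ab_nu n m r Hm Hmn Hr). unfold r', s'. rewrite Nat.eqb_refl. ring.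
    + assert (E3 : (r' =? s')%nat = false) by (apply Nat.eqb_neq; unfold r', s'; lia).
      rewrite E3. ring.
Qed.

Lemma tau_sq n m r k h : (0 < m)%nat -> (0 < n)%nat ->
  vp_tau n m r k * vp_tau n m r h * vp_nu n m r = PI / INR n * (cheb_p r (cheb_node n k) * cheb_p r (cheb_node n h)).
Proof.
  intros Hm Hn. pose proof (nu_pos n m r Hm). pose proof PI_RGT_0.
  assert (0 < INR n) by (apply lt_0_INR; lia).
  unfold vp_tau.
  assert (Hc : 0 <= PI / (INR n * vp_nu n m r)) by (left; apply Rdiv_lt_0_compat; nra).
  transitivity (sqrt (PI / (INR n * vp_nu n m r)) * sqrt (PI / (INR n * vp_nu n m r)) * vp_nu n m r *
     (cheb_p r (cheb_node n k) * cheb_p r (cheb_node n h))); [ring|].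
  rewrite sqrt_sqrt by auto. field. split; lra.
Qed.

Lemma T2 n m r s : (0 < m)%nat -> (m < n)%nat -> (r < n)%nat -> (s < n)%nat ->
  sumR n (fun i => vp_tau n m r (S i) * vp_tau n m s (S i)) = if (r =? s)%nat then / vp_nu n m r else 0.
Proof.
  intros Hm Hmn Hr Hs.
  pose proof (nu_pos n m r Hm). pose proof PI_RGT_0.
  assert (0 < INR n) by (apply lt_0_INR; lia).
  unfold vp_tau.
  rewrite (sumR_ext _ _ (fun i => sqrt (PI / (INR n * vp_nu n m r)) * sqrt (PI / (INR n * vp_nu n m s)) *
     (cheb_p r (cheb_node n (S i)) * cheb_p s (cheb_node n (S i))))) by (intros; ring).
  rewrite <- sumR_scal, D2 by lia.
  destruct (Nat.eqb_spec r s) as [<-|].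
  - rewrite sqrt_sqrt by (left; apply Rdiv_lt_0_compat; nra). field. split; lra.
  - ring.
Qed.

Lemma orth n m k h : (0 < m)%nat -> (m < n)%nat -> (1 <= k <= n)%nat -> (1 <= h <= n)%nat ->
  IG (fun x => vp_phi n m k x * vp_phi n m h x * cheb_w x) (if (k =? h)%nat then 1 else 0).
Proof.
  intros Hm Hmn Hk Hh.
  assert (H := IG_sum n (fun r x => sumR n (fun s => vp_tau n m r k * vp_tau n m s h * (vp_q n m r x * vp_q n m s x * cheb_w x)))
     (fun r => sumR n (fun s => vp_tau n m r k * vp_tau n m s h * (if (r =? s)%nat then vp_nu n m r else 0)))).
  eapply IG_val. eapply IG_ext; [|apply H].
  - intros x _. unfold vp_phi. rewrite sumR_mul, sumR_scal_r. apply sumR_ext. intros r _.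
    rewrite sumR_scal_r. apply sumR_ext. intros s _. ring.
  - intros r Hr. apply IG_sum. intros s Hs. apply IG_scal. apply int_qq; auto.
  - rewrite (sumR_ext _ _ (fun r => PI / INR n * (cheb_p r (cheb_node n k) * cheb_p r (cheb_node n h)))).
    + rewrite <- sumR_scal, D1 by auto. destruct (k =? h)%nat; [|ring].
      assert (0 < INR n) by (apply lt_0_INR; lia). pose proof PI_RGT_0. field. split; lra.
    + intros r Hr. rewrite <- (tau_sq n m) by lia.
      rewrite (sumR_ext _ _ (fun s => if (r =? s)%nat then vp_tau n m r k * vp_tau n m s h * vp_nu n m r else 0)).
      * apply (sumR_delta n r (fun s => vp_tau n m r k * vp_tau n m s h * vp_nu n m r)); auto.
      * intros s _. destruct (r =? s)%nat; ring.
Qed.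

Lemma span1 n m f : (0 < m)%nat -> (m < n)%nat -> in_span_phi n m f -> in_Vnm n m f.
Proof.
  intros Hm Hmn [c Hc]. exists (fun r => sumR n (fun i => c i * vp_tau n m r (S i))).
  intros x Hx. rewrite Hc by auto. unfold vp_phi.
  rewrite (sumR_ext _ _ (fun i => sumR n (fun r => c i * vp_tau n m r (S i) * vp_q n m r x))).
  - rewrite sumR_swap. apply sumR_ext. intros r _. rewrite sumR_scal_r. apply sumR_ext. intros; ring.
  - intros i _. rewrite sumR_scal. apply sumR_ext. intros; ring.
Qed.

Lemma span2 n m f : (0 < m)%nat -> (m < n)%nat -> in_Vnm n m f -> in_span_phi n m f.
Proof.
  intros Hm Hmn [c Hc]. exists (fun i => sumR n (fun r => c r * vp_nu n m r * vp_tau n m r (S i))).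
  intros x Hx. rewrite Hc by auto. unfold vp_phi.
  match goal with |- _ = sumR n ?F => rewrite (sumR_ext n F (fun i => sumR n (fun r => sumR n (fun s =>
      c r * vp_nu n m r * vp_q n m s x * (vp_tau n m r (S i) * vp_tau n m s (S i)))))) end.
  2:{ intros i _. rewrite sumR_mul. apply sumR_ext. intros r _. apply sumR_ext. intros s _. ring. }
  rewrite sumR_swap. apply sumR_ext. intros r Hr.
  rewrite sumR_swap.
  rewrite (sumR_ext _ _ (fun s => if (r =? s)%nat then c r * vp_q n m s x else 0)).
  - symmetry. apply (sumR_delta n r (fun s => c r * vp_q n m s x)); auto.
  - intros s Hs. rewrite <- sumR_scal, T2 by auto. destruct (Nat.eqb_spec r s) as [<-|]; [|ring].
    pose proof (nu_pos n m r Hm). field. lra.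
Qed.

Theorem proposition1 (n m : nat) (Hm : (0 < m)%nat) (Hmn : (m < n)%nat) :
  (forall f : R -> R, in_Vnm n m f <-> in_span_phi n m f) /\
  (forall k h : nat, (1 <= k <= n)%nat -> (1 <= h <= n)%nat ->
     is_RInt_gen (fun x => vp_phi n m k x * vp_phi n m h x * cheb_w x)
       (at_right (-1)) (at_left 1)
       (if Nat.eqb k h then 1 else 0)).
Proof.
  split.
  - intros f; split; [apply span2|apply span1]; auto.
  - intros k h Hk Hh. apply orth; auto.
Qed.
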